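(* Let $\Sigma$ be an alphabet, let $\tau \in \mathcal{T}(\Sigma)$, let $t, t' \in \mathcal{T}(\Sigma)$, and let $a_1 \neq a_2$ be two letters of $\Sigma$. If $\sigma_{a_i}^{\tau}(t) = \sigma_{a_i}^{\tau}(t')$ for $i = 1, 2$, then $t = t'$.
   Context: Let $\Sigma$ be an alphabet not containing $0,1$. A binary tree over $\Sigma$ is a finite set $t \subseteq \{0,1\}^*\Sigma$ such that for any $ua, vb \in t$ with $ua \neq vb$, $u$ is not a prefix of $v$ and $v$ is not a prefix of $u$; $\mathcal{T}(\Sigma)$ is the set of such trees, $\mathbf 0=\emptyset$, and each letter $a$ is identified with the tree $\{a\}$. The operation is $t\star t' = 0.t\cup 1.t'$. Every map $h\colon\Sigma\to\mathcal{T}(\Sigma)$ extends uniquely to an endomorphism of $\langle\mathcal{T}(\Sigma),\star\rangle$ (a map $h$ with $h(t\star t')=h(t)\star h(t')$; it satisfies $h(\mathbf 0)=\mathbf 0$). For $a\in\Sigma$ and $\tau\in\mathcal{T}(\Sigma)$, the grafting $\sigma_a^{\tau}$ is the endomorphism with $\sigma_a^\tau(a)=\tau$ and $\sigma_a^\tau(b)=b$ for $b\in\Sigma$, $b\neq a$. *)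

(* Defs.v *)
From HB Require Import structures.
From mathcomp Require Import all_boot.
From mathcomp Require Import finmap.
Set Implicit Arguments. Unset Strict Implicit. Unset Printing Implicit Defensive.
Local Open Scope fset_scope.

(* A word of {0,1}^* Sigma is represented as a pair (u, a) with u : seq bool
   (0 = false, 1 = true) and a : Sigma. *)
Definition word (Sigma : finType) := (seq bool * Sigma)%type.

(* A binary tree over Sigma: a finite set of words, prefix-free in the sense
   of the paper: for distinct ua, vb in t, u is not a prefix of v. *)
Definition is_tree (Sigma : finType) (t : {fset word Sigma}) : Prop :=
  forall x y, x \in t -> y \in t -> x <> y -> ~~ prefix x.1 y.1.

Definition tree0 (Sigma : finType) : {fset word Sigma} := fset0.
Definition letter (Sigma : finType) (a : Sigma) : {fset word Sigma} :=
  [fset ([::], a)].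

Definition pre (Sigma : finType) (w : seq bool) (t : {fset word Sigma}) :
  {fset word Sigma} := [fset (w ++ y.1, y.2) | y in t].
Definition star (Sigma : finType) (t t' : {fset word Sigma}) :=
  pre [:: false] t `|` pre [:: true] t'.

(* The unique endomorphism extending h : Sigma -> T(Sigma):
   h(t) = U_{ua in t} u.h(a). *)
Definition hom (Sigma : finType) (h : Sigma -> {fset word Sigma})
  (t : {fset word Sigma}) : {fset word Sigma} :=
  \bigcup_(x <- t) pre x.1 (h x.2).

Definition graft (Sigma : finType) (a : Sigma) (tau : {fset word Sigma}) :
  {fset word Sigma} -> {fset word Sigma} :=
  hom (fun b => if b == a then tau else letter b).

(* Main.v *)
Require Import Defs.
From mathcomp Require Import all_boot.
From mathcomp Require Import finmap.
Local Open Scope fset_scope.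

Lemma in_graft (Sigma : finType) (a : Sigma) tau (t : {fset word Sigma}) x :
  x \in graft a tau t ->
  exists2 y, y \in t &
    (y.2 != a /\ x = y) \/ (y.2 = a /\ exists2 z, z \in tau & x = (y.1 ++ z.1, z.2)).
Proof.
rewrite /graft /hom => /bigfcupP [y /andP [yt _]].
case/imfsetP => z /= zin ->; exists y => //.
case: eqP zin => [ea|nea] zin; first by right; split => //; exists z.
left; split; first by apply/eqP.
by move: zin; rewrite /letter in_fset1 => /eqP ->; rewrite cats0; case: y {yt nea}.
Qed.

Lemma graft_keep (Sigma : finType) (a : Sigma) tau (t : {fset word Sigma}) y :
  y \in t -> y.2 != a -> y \in graft a tau t.
Proof.
move=> yt ya; rewrite /graft /hom; apply/bigfcupP; exists y; first by rewrite yt.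
rewrite (negbTE ya); apply/imfsetP; exists ([::], y.2) => /=.
  by rewrite /letter in_fset1.
by rewrite cats0; case: y {yt ya}.
Qed.

Arguments graft_keep {Sigma a} tau {t y}.

Lemma key (Sigma : finType) (tau t t' : {fset word Sigma}) (a1 a2 : Sigma) x :
  is_tree tau -> is_tree t -> a1 != a2 ->
  graft a1 tau t = graft a1 tau t' ->
  graft a2 tau t = graft a2 tau t' ->
  x \in t -> x.2 != a1 -> x \in t'.
Proof.
move=> Htau Ht a12 E1 E2 xt xa1.
have := graft_keep tau xt xa1; rewrite E1 => /in_graft [y yt'].
case=> [[_ ->] //| [ya [z zt xe]]].
have ya2 : y.2 != a2 by rewrite ya.
have := graft_keep tau yt' ya2.
rewrite -E2 => /in_graft [y' y't].
have xy2 : x.2 != y.2 by rewrite ya.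
case=> [[_ ey'] | [y'a [z' z't ye]]].
  exfalso; subst y'.
  have nyx : y <> x by move=> exy; move: xy2; rewrite exy eqxx.
  move: (Ht y x y't xt nyx) => /negP; apply; rewrite xe /=; exact: prefix_prefix.
have xe' : x.1 = y'.1 ++ (z'.1 ++ z.1) by rewrite xe ye /= catA.
case: (boolP (x == y')) => [/eqP exy' | nxy'].
  exfalso.
  have : size x.1 = size y'.1 by rewrite exy'.
  rewrite xe' size_cat => /eqP; rewrite -{2}(addn0 (size y'.1)) eqn_add2l size_cat addn_eq0 !size_eq0.
  move=> /andP [/eqP z'0 /eqP z0].
  have zz : z != z'.
    apply/negP => /eqP ezz; move: xy2; rewrite xe ye /= -ezz; by rewrite eqxx.
  move: (Htau z z' zt z't (elimN eqP zz)); by rewrite z0 prefix0s.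
exfalso; move: (Ht y' x y't xt (fun e => elimN eqP nxy' (esym e))) => /negP; apply.
rewrite xe'; exact: prefix_prefix.
Qed.

Arguments key {Sigma tau t t' a1 a2 x}.

Theorem mainTheorem2 (Sigma : finType) (tau t t' : {fset word Sigma})
  (a1 a2 : Sigma) :
  is_tree tau -> is_tree t -> is_tree t' -> a1 != a2 ->
  graft a1 tau t = graft a1 tau t' ->
  graft a2 tau t = graft a2 tau t' ->
  t = t'.
Proof.
move=> Htau Ht Ht' a12 E1 E2; apply/fsetP => x; apply/idP/idP => xin.
  case: (eqVneq x.2 a1) => [xa|xa]; last exact: (key Htau Ht a12 E1 E2).
  apply: (key Htau Ht _ E2 E1) => //; by rewrite ?xa // eq_sym.
case: (eqVneq x.2 a1) => [xa|xa]; last exact: (key Htau Ht' a12 (esym E1) (esym E2)).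
apply: (key Htau Ht' _ (esym E2) (esym E1)) => //; by rewrite ?xa // eq_sym.
Qed.
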